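(* Let $\Omega,\Omega^*$ be compact metric spaces and $c\in C(\Omega\times\Omega^* )$. Let $\mu_1,\mu_2$ be Borel probability measures on $\Omega$, $\nu$ a Borel probability measure on $\Omega^*$, and $\phi_i\in\Phi_c(\mu_i,\nu)$ for $i=1,2$. Suppose that at least one of the $\phi_i$ is unique up to an additive constant, i.e. $\Phi_c(\mu_i,\nu)=\{\phi_i+C: C\in\mathbb R\}$ for $i=1$ or $i=2$. Consider a Borel set $U\subset\Omega$ with $U\neq\Omega$ such that $\mu_1\leq\mu_2$ on $U$ and $\phi_1\leq\phi_2$ on $\Omega\setminus U$. Then $\phi_1\leq\phi_2$ on $\Omega$.
   Context: For $\phi\in C(\Omega)$, $\phi^c(y)=\sup_{x\in\Omega}\phi(x)-c(x,y)$. $\mathcal T_c(\mu,\nu)=\inf_{\pi\in\Pi(\mu,\nu)}\int c\,d\pi$ over couplings $\pi$ of $\mu$ and $\nu$; by duality $\mathcal T_c(\mu,\nu)=\max_{\phi\in C(\Omega)}\int\phi\,d\mu-\int\phi^c\,d\nu$. $\Phi_c(\mu,\nu)=\{\phi\in C(\Omega):\int_\Omega\phi\,d\mu-\int_{\Omega^*}\phi^c\,d\nu=\mathcal T_c(\mu,\nu)\}$. ''$\mu_1\leq\mu_2$ on $U$'' means $\mu_1(A)\leq\mu_2(A)$ for all Borel $A\subset U$. *)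

(* Defs.v *)
From HB Require Import structures.
From mathcomp Require Import all_boot all_order all_algebra.
From mathcomp Require Import all_classical all_reals all_analysis.
Set Implicit Arguments. Unset Strict Implicit. Unset Printing Implicit Defensive.
Import Order.TTheory GRing.Theory Num.Theory.
Import numFieldNormedType.Exports.
Local Open Scope classical_set_scope.
Local Open Scope ring_scope.

(* metric spaces with a distinguished point (needed to build the Borel
   measurable structure; harmless since the spaces carry probability
   measures, hence are nonempty) *)
#[short(type="pmetricType")]
HB.structure Definition PointedMetric (K : numDomainType) :=
  { M of Pointed M & Metric K M }.

Definition borel {K : numDomainType} (T : pmetricType K) :=
  g_sigma_algebraType (@open T).

Section OT.
Context {R : realType} {Om Oms : pmetricType R}.

Definition ctrans (c : Om * Oms -> R) (phi : Om -> R) (y : Oms) : R :=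
  sup [set phi x - c (x, y) | x in [set: Om]].

Definition is_coupling (mu : probability (borel Om) R)
  (nu : probability (borel Oms) R)
  (pi : probability (borel Om * borel Oms)%type R) : Prop :=
  (forall A : set (borel Om), measurable A -> pi (A `*` setT) = mu A) /\
  (forall B : set (borel Oms), measurable B -> pi (setT `*` B) = nu B).

Definition Tc (c : Om * Oms -> R) (mu : probability (borel Om) R)
  (nu : probability (borel Oms) R) : \bar R :=
  ereal_inf [set (\int[pi]_z (c z)%:E)%E
            | pi in [set pi | is_coupling mu nu pi]].

Definition Phi_c (c : Om * Oms -> R) (mu : probability (borel Om) R)
  (nu : probability (borel Oms) R) (phi : Om -> R) : Prop :=
  continuous phi /\
  ((\int[mu]_x (phi x)%:E - \int[nu]_y (ctrans c phi y)%:E)%E = Tc c mu nu).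

Definition unique_up_to_const (Phi : (Om -> R) -> Prop) (phi : Om -> R) : Prop :=
  forall psi : Om -> R, Phi psi <-> exists C : R, psi = (fun x => phi x + C).

End OT.

(* Main.v *)
Require Import Defs.
From HB Require Import structures.
From mathcomp Require Import all_boot all_order all_algebra.
From mathcomp Require Import all_classical all_reals all_analysis.
From mathcomp Require Import lra.
Import Order.TTheory GRing.Theory Num.Theory.
Import numFieldNormedType.Exports.
Local Open Scope classical_set_scope.
Local Open Scope ring_scope.
Set Implicit Arguments. Unset Strict Implicit.
Lemma ge0_le_integral_nm d (T : measurableType d) (R : realType) (mu : {measure set T -> \bar R}) (f g : T -> \bar R) :
  (forall x, (0 <= f x)%E) -> (forall x, (f x <= g x)%E) -> (\int[mu]_x f x <= \int[mu]_x g x)%E.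
Proof.
move=> f0 fg.
have g0 : forall x, (0 <= g x)%E by move=> x; exact: (le_trans (f0 x) (fg x)).
rewrite (ge0_integralTE _ f0) (ge0_integralTE _ g0).
apply: le_ereal_sup => _ [h hf <-]; exists h => //= x; exact: le_trans (hf x) (fg x).
Qed.
Lemma cont_bound (R : realType) (X : topologicalType) (f : X -> R) :
  compact [set: X] -> continuous f -> exists M, forall x, `|f x| <= M.
Proof.
move=> cX cf.
have := compact_bounded (continuous_compact (continuous_subspaceT cf) cX).
move=> [M [_ HM]]; exists (`|M| + 1) => x.
apply: (HM (`|M| + 1)); last by exists x.
by apply: (le_lt_trans (ler_norm M)); rewrite ltrDl.
Qed.

Lemma lsc_meas (R : realType) (X : pmetricType R) (f : borel X -> R) :
  (forall a : R, open [set x : X | a < f x]) -> measurable_fun setT f.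
Proof.
move=> hf; apply: (measurability _ (measurable_realfun.RGenOInfty.measurableE R)).
move=> /= _ [_ [a ->]] <-; rewrite setTI.
apply: sub_sigma_algebra.
have -> : f @^-1` `]a, +oo[%classic = [set x : X | a < f x].
  by apply/seteqP; split => x /=; rewrite in_itv /= andbT.
exact: hf.
Qed.

Lemma cont_meas (R : realType) (X : pmetricType R) (f : X -> R) :
  continuous f -> measurable_fun setT (f : borel X -> R).
Proof.
move=> cf; apply: lsc_meas => a.
have -> : [set x : X | a < f x] = f @^-1` `]a, +oo[%classic.
  by apply/seteqP; split => x /=; rewrite in_itv /= andbT.
apply: open_comp => [x _|]; first exact: cf.
exact: rray_open.
Qed.
Lemma absle (R : realType) (x M : R) : `|x| <= M -> -M <= x /\ x <= M.
Proof. by rewrite ler_norml => /andP. Qed.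

Section CT.
Context (R : realType) (Om Oms : pmetricType R)
  (c : Om * Oms -> R) (hc : continuous c) (Mc : R) (hMc : forall z, `|c z| <= Mc)
  (psi : Om -> R) (M : R) (hM : forall x, `|psi x| <= M).

Let S y := [set psi x - c (x, y) | x in [set: Om]].

Let hS y : has_sup (S y).
Proof.
split; first by exists (psi point - c (point, y)); exists point.
exists (M + Mc) => _ [x _ <-].
have [h1 h2] := absle (hM x); have [h3 h4] := absle (hMc (x, y)); lra.
Qed.

Lemma ctrans_ub x y : psi x - c (x, y) <= ctrans c psi y.
Proof. rewrite /ctrans; apply: (sup_upper_bound (hS y)); by exists x. Qed.

Lemma ctrans_le y a : (forall x, psi x - c (x, y) <= a) -> ctrans c psi y <= a.
Proof. by move=> h; apply: ge_sup; [case: (hS y)|move=> _ [x _ <-]]. Qed.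

Lemma ctrans_gt y a : a < ctrans c psi y -> exists x, a < psi x - c (x, y).
Proof. by case/(sup_gt (proj1 (hS y))) => _ [x _ <-] h; exists x. Qed.

Lemma ctrans_bound y : `|ctrans c psi y| <= M + Mc.
Proof.
rewrite ler_norml; apply/andP; split.
  have := ctrans_ub point y.
  have [h1 h2] := absle (hM point); have [h3 h4] := absle (hMc (point, y)); lra.
apply: ctrans_le => x.
have [h1 h2] := absle (hM x); have [h3 h4] := absle (hMc (x, y)); lra.
Qed.

Lemma ctrans_meas : measurable_fun setT (ctrans c psi : borel Oms -> R).
Proof.
apply: lsc_meas => a; rewrite openE => y0 /= /ctrans_gt [x hx].
have cg : continuous (fun y : Oms => psi x - c (x, y)).
  move=> y; apply: cvgB; first exact: cvg_cst.
  apply: continuous_comp; last exact: hc.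
  by apply: cvg_pair; [exact: cvg_cst|exact: cvg_id].
rewrite /interior; near=> y.
apply: (lt_le_trans _ (ctrans_ub x y)).
near: y; exact: (cvgr_gt _ (cg y0)).
Unshelve. all: by end_near.
Qed.

End CT.
Lemma le_integral_nm d (T : measurableType d) (R : realType)
  (mu : {measure set T -> \bar R}) (f g : T -> \bar R) :
  (forall x, (f x <= g x)%E) -> (\int[mu]_x f x <= \int[mu]_x g x)%E.
Proof.
move=> fg; rewrite integralE [leRHS]integralE; apply: leeB.
  apply: ge0_le_integral_nm => x; first exact: funepos_ge0.
  by apply: (@funepos_le _ _ setT) => [y _|]; [exact: fg|rewrite in_setT].
apply: ge0_le_integral_nm => x; first exact: funeneg_ge0.
by apply: (@funeneg_le _ _ setT) => [y _|]; [exact: fg|rewrite in_setT].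
Qed.

Lemma bnd_int d (T : measurableType d) (R : realType) (P : probability T R)
  (f : T -> R) (M : R) : measurable_fun setT f -> (forall x, `|f x| <= M) ->
  P.-integrable setT (EFin \o f).
Proof.
move=> mf hM; apply: measurable_bounded_integrable => //.
  have h1 : (P setT = 1)%E by exact: probability_setT.
  apply: (@le_lt_trans _ _ 1%E); last exact: ltry.
  by rewrite le_eqVlt; apply/orP; left; apply/eqP; exact: h1.
exists M; split; first exact: num_real.
move=> M' hM' x _; exact: le_trans (hM x) (ltW hM').
Qed.

Lemma int_real d (T : measurableType d) (R : realType) (P : probability T R)
  (f : T -> R) (M : R) : measurable_fun setT f -> (forall x, `|f x| <= M) ->
  (\int[P]_x (f x)%:E)%E = (fine (\int[P]_x (f x)%:E))%:E.
Proof.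
move=> mf hM; rewrite fineK //; apply: integrable_fin_num => //; have h := @bnd_int _ _ _ P f M mf hM. exact: h.
Qed.
Section WD.
Context (R : realType) (Om Oms : pmetricType R)
  (c : Om * Oms -> R) (hc : continuous c) (Mc : R) (hMc : forall z, `|c z| <= Mc).

Lemma weak_duality (mu : probability (borel Om) R) (nu : probability (borel Oms) R)
  (psi : Om -> R) (M : R) (hM : forall x, `|psi x| <= M) (cpsi : continuous psi) :
  (\int[mu]_x (psi x)%:E - \int[nu]_y (ctrans c psi y)%:E <= Tc c mu nu)%E.
Proof.
rewrite /Tc; apply/ereal_infP => _ [pi [hp1 hp2] <-].
have mpsi := cont_meas cpsi.
have mct := ctrans_meas hc hMc hM.
have bct := ctrans_bound hMc hM.
have mf1 : measurable_fun setT (fun z : (borel Om * borel Oms)%type => psi z.1).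
  exact: measurableT_comp mpsi measurable_fst.
have mf2 : measurable_fun setT (fun z : (borel Om * borel Oms)%type => ctrans c psi z.2).
  exact: measurableT_comp mct measurable_snd.
have i1 := @bnd_int _ _ _ pi _ M mf1 (fun z => hM z.1).
have i2 := @bnd_int _ _ _ pi _ (M + Mc) mf2 (fun z => bct z.2).
have e1 : (\int[mu]_x (psi x)%:E = \int[pi]_z (psi z.1)%:E)%E.
  rewrite (eq_measure_integral (pushforward pi fst)); last first.
    move=> A mA _ /=; apply: esym; apply: eq_trans _ (hp1 A mA); congr (pi _).
    by apply/seteqP; split => z /=; [move=> ?; split|case].
  rewrite (integral_pushforward (f := fun x : borel Om => (psi x)%:E) measurable_fst) //.
  by apply/measurable_realfun.measurable_EFinP.
have e2 : (\int[nu]_y (ctrans c psi y)%:E = \int[pi]_z (ctrans c psi z.2)%:E)%E.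
  rewrite (eq_measure_integral (pushforward pi snd)); last first.
    move=> A mA _ /=; apply: esym; apply: eq_trans _ (hp2 A mA); congr (pi _).
    by apply/seteqP; split => z /=; [move=> ?; split|case].
  rewrite (integral_pushforward (f := fun y : borel Oms => (ctrans c psi y)%:E) measurable_snd) //.
  by apply/measurable_realfun.measurable_EFinP.
rewrite e1 e2 -integralB //.
apply: le_integral_nm => z; rewrite -EFinB lee_fin.
have := ctrans_ub hMc hM z.1 z.2; case: z => x y /=; lra.
Qed.

End WD.
Lemma int_le_U (R : realType) (Om : pmetricType R) (mu1 mu2 : probability (borel Om) R)
  (U : set (borel Om)) (hU : measurable U)
  (hmu : forall A : set (borel Om), measurable A -> A `<=` U -> (mu1 A <= mu2 A)%E)
  (g : borel Om -> R) : measurable_fun setT g -> (forall x, 0 <= g x) ->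
  (forall x, ~ U x -> g x = 0) ->
  (\int[mu1]_x (g x)%:E <= \int[mu2]_x (g x)%:E)%E.
Proof.
move=> mg g0 gU.
have eg : forall mu : probability (borel Om) R,
    (\int[mu]_x (g x)%:E = \int[mu]_(x in U) (g x)%:E)%E.
  move=> mu; rewrite [RHS]integral_mkcond; congr integral; apply/funext => x.
  rewrite /patch; case: ifPn => // /negP; rewrite in_setE => nU.
  by rewrite gU.
rewrite !eg (eq_measure_integral (mrestr mu1 hU)); last first.
  by move=> A mA AU; unfold mrestr; cbv beta; apply: congr1; apply/esym/setIidl.
rewrite [X in (_ <= X)%E](eq_measure_integral (mrestr mu2 hU)); last first.
  by move=> A mA AU; unfold mrestr; cbv beta; apply: congr1; apply/esym/setIidl.
apply: ge0_le_measure_integral => //.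
- move=> S mS; unfold mrestr; cbv beta; apply: hmu; [exact: measurableI|exact: subIsetr].
- by apply/measurable_realfun.measurable_EFinP.
Qed.
Lemma intD d (T : measurableType d) (R : realType) (P : probability T R)
  (f h : T -> R) (Mf Mh : R) : measurable_fun setT f -> (forall x, `|f x| <= Mf) ->
  measurable_fun setT h -> (forall x, `|h x| <= Mh) ->
  (\int[P]_x (f x + h x)%:E = \int[P]_x (f x)%:E + \int[P]_x (h x)%:E)%E.
Proof.
move=> mf bf mh bh.
have i1 := @bnd_int _ _ _ P f Mf mf bf.
have i2 := @bnd_int _ _ _ P h Mh mh bh.
under eq_integral do rewrite EFinD.
exact: (integralD measurableT i1 i2).
Qed.

Lemma intB d (T : measurableType d) (R : realType) (P : probability T R)
  (f h : T -> R) (Mf Mh : R) : measurable_fun setT f -> (forall x, `|f x| <= Mf) ->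
  measurable_fun setT h -> (forall x, `|h x| <= Mh) ->
  (\int[P]_x (f x - h x)%:E = \int[P]_x (f x)%:E - \int[P]_x (h x)%:E)%E.
Proof.
move=> mf bf mh bh.
have i1 := @bnd_int _ _ _ P f Mf mf bf.
have i2 := @bnd_int _ _ _ P h Mh mh bh.
under eq_integral do rewrite EFinB.
exact: (integralB measurableT i1 i2).
Qed.

Lemma not_all_U (T : Type) (U : set T) : U <> setT -> exists x, ~ U x.
Proof.
move=> hUT; apply/boolp.existsNP => h; apply: hUT.
by apply/seteqP; split => // x _; exact: h.
Qed.
Unset Implicit Arguments.

Theorem corollary3p3 (R : realType) (Om Oms : pmetricType R)
  (hOm : compact [set: Om]) (hOms : compact [set: Oms])
  (c : Om * Oms -> R) (hc : continuous c)
  (mu1 mu2 : probability (borel Om) R) (nu : probability (borel Oms) R)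
  (phi1 phi2 : Om -> R)
  (h1 : Phi_c c mu1 nu phi1) (h2 : Phi_c c mu2 nu phi2)
  (huniq : unique_up_to_const (Phi_c c mu1 nu) phi1 \/
           unique_up_to_const (Phi_c c mu2 nu) phi2)
  (U : set (borel Om)) (hU : measurable U) (hUT : U <> [set: Om])
  (hmu : forall A : set (borel Om), measurable A -> A `<=` U ->
           (mu1 A <= mu2 A)%E)
  (hphi : forall x : Om, ~ U x -> phi1 x <= phi2 x) :
  forall x : Om, phi1 x <= phi2 x.
Proof.
have cT : compact [set: Om * Oms] by rewrite -setXTT; exact: compact_setX.
have [Mc hMc] := cont_bound cT hc.
case: h1 => cp1 e1; case: h2 => cp2 e2.
have [M1 hM1] := cont_bound hOm cp1.
have [M2 hM2] := cont_bound hOm cp2.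
pose m := fun x => Num.min (phi1 x) (phi2 x).
pose Mx := fun x => Num.max (phi1 x) (phi2 x).
pose g := fun x => phi1 x - m x.
have cm : continuous m by exact: (min_fun_continuous cp1 cp2).
have cMx : continuous Mx by exact: (max_fun_continuous cp1 cp2).
have cg : continuous g by move=> x; apply: cvgB; [exact: cp1|exact: cm].
have mmx x : (m x = phi1 x /\ Mx x = phi2 x /\ phi1 x <= phi2 x) \/
             (m x = phi2 x /\ Mx x = phi1 x /\ phi2 x < phi1 x).
  rewrite /m /Mx /=; case: (leP (phi1 x) (phi2 x)) => h.
    by left.
  by right.
have M10 : 0 <= M1 by exact: le_trans (normr_ge0 _) (hM1 point).
have M20 : 0 <= M2 by exact: le_trans (normr_ge0 _) (hM2 point).
have bm x : `|m x| <= M1 + M2.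
  have [a1 a2] := absle (hM1 x); have [b1 b2] := absle (hM2 x).
  rewrite ler_norml; case: (mmx x) => [[-> _]|[-> _]]; apply/andP; split; lra.
have bMx x : `|Mx x| <= M1 + M2.
  have [a1 a2] := absle (hM1 x); have [b1 b2] := absle (hM2 x).
  rewrite ler_norml; case: (mmx x) => [[_ [-> _]]|[_ [-> _]]]; apply/andP; split; lra.
have bg x : `|g x| <= M1 + M2.
  have [a1 a2] := absle (hM1 x); have [b1 b2] := absle (hM2 x).
  rewrite /g ler_norml; case: (mmx x) => [[-> _]|[-> [_ h]]]; apply/andP; split; lra.
have g0 x : 0 <= g x.
  by rewrite /g; case: (mmx x) => [[-> _]|[-> [_ h]]]; lra.
have gU x : ~ U x -> g x = 0.
  move=> nU; have := hphi x nU; rewrite /g.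
  by case: (mmx x) => [[-> _]|[-> [_ h]]]; lra.
have gM x : Mx x = phi2 x + g x.
  by rewrite /g; case: (mmx x) => [[-> [-> _]]|[-> [-> _]]]; lra.
have mp1 := cont_meas cp1. have mp2 := cont_meas cp2.
have mm := cont_meas cm. have mMx := cont_meas cMx. have mg := cont_meas cg.
have bc1 := ctrans_bound hMc hM1. have bc2 := ctrans_bound hMc hM2.
have bcm := ctrans_bound hMc bm. have bcM := ctrans_bound hMc bMx.
have mc1 := ctrans_meas hc hMc hM1. have mc2 := ctrans_meas hc hMc hM2.
have mcm := ctrans_meas hc hMc bm. have mcM := ctrans_meas hc hMc bMx.
have ctle y : ctrans c m y + ctrans c Mx y <= ctrans c phi1 y + ctrans c phi2 y.
  have hm1 : ctrans c m y <= ctrans c phi1 y.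
    apply: (ctrans_le hMc bm) => x; have := ctrans_ub hMc hM1 x y.
    by case: (mmx x) => [[-> _]|[-> [_ h]]]; lra.
  have hm2 : ctrans c m y <= ctrans c phi2 y.
    apply: (ctrans_le hMc bm) => x; have := ctrans_ub hMc hM2 x y.
    by case: (mmx x) => [[-> [_ h]]|[-> _]]; lra.
  have hM : ctrans c Mx y <= Num.max (ctrans c phi1 y) (ctrans c phi2 y).
    apply: (ctrans_le hMc bMx) => x; have := ctrans_ub hMc hM1 x y; have := ctrans_ub hMc hM2 x y.
    by case: (leP (ctrans c phi1 y) (ctrans c phi2 y)) => h;
      case: (mmx x) => [[_ [-> _]]|[_ [-> _]]]; lra.
  by move: hM; case: (leP (ctrans c phi1 y) (ctrans c phi2 y)) => h; lra.
have ictle : (\int[nu]_y (ctrans c m y)%:E + \int[nu]_y (ctrans c Mx y)%:E <=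
    \int[nu]_y (ctrans c phi1 y)%:E + \int[nu]_y (ctrans c phi2 y)%:E)%E.
  rewrite -(intD _ mcm bcm mcM bcM) -(intD _ mc1 bc1 mc2 bc2).
  by apply: le_integral_nm => y; rewrite lee_fin.
have im : (\int[mu1]_x (m x)%:E = \int[mu1]_x (phi1 x)%:E - \int[mu1]_x (g x)%:E)%E.
  rewrite -(intB _ mp1 hM1 mg bg); apply: eq_integral => x _.
  by rewrite /g; congr EFin; lra.
have iM : (\int[mu2]_x (Mx x)%:E = \int[mu2]_x (phi2 x)%:E + \int[mu2]_x (g x)%:E)%E.
  rewrite -(intD _ mp2 hM2 mg bg); apply: eq_integral => x _.
  by rewrite gM.
have ig : (\int[mu1]_x (g x)%:E <= \int[mu2]_x (g x)%:E)%E.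
  exact: int_le_U hU hmu g mg g0 gU.
have wd1 := weak_duality hc hMc mu1 nu bm cm.
have wd2 := weak_duality hc hMc mu2 nu bMx cMx.
rewrite -e1 in wd1; rewrite -e2 in wd2.
have fin (P : probability (borel Om) R) (f : Om -> R) (M : R) :
    measurable_fun setT (f : borel Om -> R) -> (forall x, `|f x| <= M) ->
    exists a : R, (\int[P]_x (f x)%:E = a%:E)%E.
  by move=> mf bf; exists (fine (\int[P]_x (f x)%:E)%E); exact: (@int_real _ _ _ P f M mf bf).
have finn (f : Oms -> R) (M : R) :
    measurable_fun setT (f : borel Oms -> R) -> (forall x, `|f x| <= M) ->
    exists a : R, (\int[nu]_x (f x)%:E = a%:E)%E.
  by move=> mf bf; exists (fine (\int[nu]_x (f x)%:E)%E); exact: (@int_real _ _ _ nu f M mf bf).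
have [A1 eA1] := fin mu1 _ _ mp1 hM1.
have [A2 eA2] := fin mu2 _ _ mp2 hM2.
have [G1 eG1] := fin mu1 _ _ mg bg.
have [G2 eG2] := fin mu2 _ _ mg bg.
have [C1 eC1] := finn _ _ mc1 bc1.
have [C2 eC2] := finn _ _ mc2 bc2.
have [Cm eCm] := finn _ _ mcm bcm.
have [CM eCM] := finn _ _ mcM bcM.
rewrite im eA1 eG1 eCm eC1 -!EFinB lee_fin in wd1.
rewrite iM eA2 eG2 eCM eC2 -EFinD -!EFinB lee_fin in wd2.
rewrite eCm eCM eC1 eC2 -!EFinD lee_fin in ictle.
rewrite eG1 eG2 lee_fin in ig.
have Pm : Phi_c c mu1 nu m.
  split => //; rewrite -e1 im eA1 eG1 eCm eC1 -!EFinB; congr EFin; lra.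
have PM : Phi_c c mu2 nu Mx.
  split => //; rewrite -e2 iM eA2 eG2 eCM eC2 -EFinD -!EFinB; congr EFin; lra.
have [x0 nx0] := not_all_U hUT.
have h0 := hphi x0 nx0.
case: huniq => hu.
  have [C hC] := (hu m).1 Pm.
  have := congr1 (fun f => f x0) hC => /=.
  case: (mmx x0) => [[-> _]|[_ [_ h]]]; last by lra.
  move=> hC0; have C0 : C = 0 by lra.
  move=> x; have := congr1 (fun f => f x) hC => /=; rewrite C0 addr0.
  by case: (mmx x) => [[_ [_ h]]|[-> [_ h]]] //; lra.
have [C hC] := (hu Mx).1 PM.
have := congr1 (fun f => f x0) hC => /=.
case: (mmx x0) => [[_ [-> _]]|[_ [_ h]]]; last by lra.
move=> hC0; have C0 : C = 0 by lra.
move=> x; have := congr1 (fun f => f x) hC => /=; rewrite C0 addr0.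
by case: (mmx x) => [[_ [_ h]]|[_ [-> h]]] //; lra.
Qed.
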